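(* Consider the perturbed federated algorithm described in the context, with $\beta\in(0,1)$. Assume that the bounded variance, bounded stochastic gradient norm and $L$-smoothness assumptions hold. Then for every round $t\ge0$ and every pair of clients $i,j$, $$\mathbb{E}\|\mathbf{u}^i_t-\mathbf{u}^j_t\|^2\le\mathbb{1}_{t\ge1}\,4\gamma_{t-1}^2E^2G^2.$$
   Context: Setting: there are $C$ clients with local objectives $F_i:\mathbb{R}^D\to\mathbb{R}$. Similarity weights $p_{in}\ge0$ are symmetric, satisfy $p_{ii}=0$, and $\sum_{i,n}p_{in}=1$. Let $p_i=\sum_np_{in}>0$. Algorithm, with parameter $\beta$, $E\ge1$ local steps and step sizes $\gamma_t$, all clients participating: - $\mathbf{u}^i_0=\overline{\mathbf{w}}_{0,0}$. - In round $t$, $\mathbf{w}^i_{t,0}=\overline{\mathbf{w}}_{t,0}$. For $k=0,\dots,E-1$, $\widetilde{\mathbf{w}}^i_{t,k}=\beta\mathbf{w}^i_{t,k}+(1-\beta)\mathbf{u}^i_t$ and $\mathbf{w}^i_{t,k+1}=\mathbf{w}^i_{t,k}-\gamma_tg_i(\widetilde{\mathbf{w}}^i_{t,k})$, with stochastic gradients $g_i$ of $F_i$ sampled independently given the past. - $\overline{\mathbf{w}}_{t,k}=\sum_ip_i\mathbf{w}^i_{t,k}$ and $\overline{\mathbf{w}}_{t+1,0}=\overline{\mathbf{w}}_{t,E}$. - For $t\ge1$, $\mathbf{u}^i_t=\frac1{p_i}\sum_np_{in}\mathbf{w}^n_{t-1,E}$. Assumptions: - Unbiasedness: $\mathbb{E}\,g_i(\widetilde{\mathbf{w}}^i_{t,k})=\nabla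 F_i(\widetilde{\mathbf{w}}^i_{t,k})$. - Variance: $\mathbb{E}\|g_i(\widetilde{\mathbf{w}}^i_{t,k})-\nabla F_i(\widetilde{\mathbf{w}}^i_{t,k})\|^2\le\sigma^2$. - Bounded second moment: $\mathbb{E}\|g_i(\widetilde{\mathbf{w}}^i_{t,k})\|^2\le G^2$. - Each $\nabla F_i$ is $L$-Lipschitz. $\mathbb{E}$ is total expectation. *)

(* Defs.v *)
From HB Require Import structures.
From mathcomp Require Import all_boot all_order all_algebra.
From mathcomp Require Import all_classical all_reals all_analysis.
Set Implicit Arguments. Unset Strict Implicit. Unset Printing Implicit Defensive.
Import Order.TTheory GRing.Theory Num.Theory.
Local Open Scope ring_scope.

Definition dotv (R : realType) (D : nat) (x y : 'rV[R]_D) : R :=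
  \sum_(a < D) x 0 a * y 0 a.
Definition sqnorm (R : realType) (D : nat) (x : 'rV[R]_D) : R := dotv x x.
Definition enorm (R : realType) (D : nat) (x : 'rV[R]_D) : R := Num.sqrt (sqnorm x).

Section Algo.
Variables (R : realType) (T : Type) (C D : nat).
Variables (p : 'I_C -> 'I_C -> R)
          (beta : R) (E : nat) (gamma : nat -> R) (w0 : 'rV[R]_D)
          (g : 'I_C -> nat -> nat -> T -> 'rV[R]_D).
  (* g i t k x = realised stochastic gradient g_i(wtilde^i_{t,k}) of client i,
     round t, local step k, at sample point x *)
Variable x : T.

Definition pw (i : 'I_C) : R := \sum_(n < C) p i n.

(* prev = None for round 0, Some (w^n_{t-1,E})_n for round t >= 1 *)
Definition start_of (prev : option ('I_C -> 'rV[R]_D)) : 'rV[R]_D :=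
  match prev with None => w0 | Some e => \sum_(i < C) pw i *: e i end.
Definition u_of (prev : option ('I_C -> 'rV[R]_D)) (i : 'I_C) : 'rV[R]_D :=
  match prev with
  | None => w0
  | Some e => (pw i)^-1 *: \sum_(n < C) p i n *: e n end.

Fixpoint local (t : nat) (prev : option ('I_C -> 'rV[R]_D)) (i : 'I_C) (k : nat)
  : 'rV[R]_D :=
  match k with
  | 0 => start_of prev
  | k'.+1 => local t prev i k' - gamma t *: g i t k' x
  end.

Fixpoint ends (t : nat) : 'I_C -> 'rV[R]_D :=
  let prev := match t with 0 => None | t'.+1 => Some (ends t') end in
  fun i => local t prev i E.

Definition prev_of (t : nat) : option ('I_C -> 'rV[R]_D) :=
  match t with 0 => None | t'.+1 => Some (ends t') end.

Definition wbar (t : nat) : 'rV[R]_D := start_of (prev_of t).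
Definition u (t : nat) (i : 'I_C) : 'rV[R]_D := u_of (prev_of t) i.
Definition w (t : nat) (i : 'I_C) (k : nat) : 'rV[R]_D := local t (prev_of t) i k.
Definition wtilde (t : nat) (i : 'I_C) (k : nat) : 'rV[R]_D :=
  beta *: w t i k + (1 - beta) *: u t i.
End Algo.

(* Main.v *)
Require Import Defs.
From HB Require Import structures.
From mathcomp Require Import all_boot all_order all_algebra.
From mathcomp Require Import all_classical all_reals all_analysis measurable_realfun.
From mathcomp Require Import ring lra.
Import Order.TTheory GRing.Theory Num.Theory.
Local Open Scope ring_scope.
Set Implicit Arguments. Unset Strict Implicit.

Lemma sqnorm_ge0 (R : realType) (D : nat) (v : 'rV[R]_D) : 0 <= sqnorm v.
Proof. by apply: sumr_ge0 => a _; rewrite -expr2 sqr_ge0. Qed.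

Lemma sqnormZ (R : realType) (D : nat) (c : R) (v : 'rV[R]_D) :
  sqnorm (c *: v) = c ^+ 2 * sqnorm v.
Proof.
rewrite /sqnorm /dotv mulr_sumr; apply: eq_bigr => a _; rewrite !mxE; ring.
Qed.

Lemma sqnormB (R : realType) (D : nat) (v w : 'rV[R]_D) :
  sqnorm (v - w) <= 2 * sqnorm v + 2 * sqnorm w.
Proof.
rewrite /sqnorm /dotv !mulr_sumr -big_split /=; apply: ler_sum => a _.
rewrite !mxE; set x := v 0 a; set y := w 0 a.
have := sqr_ge0 (x + y); nra.
Qed.

Lemma jensen_sq (R : realType) (I : finType) (q y : I -> R) :
  (forall n, 0 <= q n) -> \sum_n q n = 1 ->
  (\sum_n q n * y n) ^+ 2 <= \sum_n q n * y n ^+ 2.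
Proof.
move=> q0 q1; set m := \sum_n q n * y n.
have H : 0 <= \sum_n q n * (y n - m) ^+ 2.
  by apply: sumr_ge0 => n _; rewrite mulr_ge0 ?sqr_ge0.
have E : \sum_n q n * (y n - m) ^+ 2 =
   \sum_n q n * y n ^+ 2 - 2 * m * (\sum_n q n * y n) + m ^+ 2 * \sum_n q n.
  have -> : \sum_n q n * (y n - m) ^+ 2 =
     \sum_n (q n * y n ^+ 2 + (- (2 * m)) * (q n * y n) + m ^+ 2 * q n).
    by apply: eq_bigr => n _; ring.
  rewrite !big_split /= -!mulr_sumr; ring.
move: H; rewrite E q1 -/m; nra.
Qed.

Lemma jensen_vec (R : realType) (D : nat) (I : finType) (q : I -> R)
  (v : I -> 'rV[R]_D) :
  (forall n, 0 <= q n) -> \sum_n q n = 1 ->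
  sqnorm (\sum_n q n *: v n) <= \sum_n q n * sqnorm (v n).
Proof.
move=> q0 q1; rewrite /sqnorm /dotv.
under [X in _ <= X]eq_bigr => n _ do rewrite mulr_sumr.
rewrite [X in _ <= X]exchange_big /=; apply: ler_sum => a _.
rewrite summxE -expr2.
rewrite (eq_bigr (fun k => q k * v k 0 a)); last by move=> k _; rewrite mxE.
under [X in _ <= X]eq_bigr => n _ do rewrite -expr2.
exact: jensen_sq.
Qed.

Lemma sum_sq (R : realType) (D N : nat) (v : 'I_N -> 'rV[R]_D) :
  sqnorm (\sum_k v k) <= N%:R * \sum_k sqnorm (v k).
Proof.
case: N v => [|N] v.
  by rewrite !big_ord0 mul0r /sqnorm /dotv big1 // => a _; rewrite mxE mul0r.
have N0 : (N.+1%:R : R) != 0 by rewrite pnatr_eq0.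
have -> : \sum_k v k = N.+1%:R *: \sum_k (N.+1%:R^-1) *: v k.
  by rewrite -scaler_sumr scalerA divff // scale1r.
rewrite sqnormZ.
have J := @jensen_vec R D _ (fun _ : 'I_N.+1 => N.+1%:R^-1) v.
have Nq : 0 <= (N.+1%:R : R)^-1 by rewrite invr_ge0 ler0n.
have Ns : \sum_(k < N.+1) (N.+1%:R : R)^-1 = 1.
  by rewrite sumr_const card_ord -[_ *+ _]mulr_natr mulVf.
have {}J := J (fun _ => Nq) Ns; rewrite -mulr_sumr in J.
have S0 : 0 <= \sum_k sqnorm (v k) by apply: sumr_ge0 => k _; exact: sqnorm_ge0.
apply: le_trans (ler_wpM2l (sqr_ge0 _) J) _.
rewrite mulrA expr2 -(mulrA N.+1%:R) divff // mulr1.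
exact: lexx.
Qed.

Section Iter.
Variables (R : realType) (T : Type) (C D : nat).
Variables (p : 'I_C -> 'I_C -> R) (E : nat) (gamma : nat -> R) (w0 : 'rV[R]_D)
          (g : 'I_C -> nat -> nat -> T -> 'rV[R]_D) (x : T).

Lemma local_eq t prev i k :
  local p gamma w0 g x t prev i k = start_of p w0 prev - gamma t *: \sum_(l < k) g i t l x.
Proof.
elim: k => [|k IH] /=; first by rewrite big_ord0 scaler0 subr0.
by rewrite IH big_ord_recr /= scalerDr opprD addrA.
Qed.

Lemma ends_eq t n : ends p E gamma w0 g x t n =
  local p gamma w0 g x t (prev_of p E gamma w0 g x t) n E.
Proof. by case: t. Qed.

Definition Aof t (i : 'I_C) : 'rV[R]_D :=
  (pw p i)^-1 *: \sum_n p i n *: \sum_(k < E) g n t k x.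

Lemma u_succ t i : pw p i != 0 ->
  u p E gamma w0 g x t.+1 i =
  start_of p w0 (prev_of p E gamma w0 g x t) - gamma t *: Aof t i.
Proof.
move=> pi0; rewrite /u /= /Aof.
set s := start_of _ _ _.
under eq_bigr => n _ do rewrite ends_eq local_eq -/s scalerBr scalerA mulrC -scalerA.
rewrite sumrB -scaler_sumr -scaler_suml -/(pw p i) scalerBr scalerA mulVf // scale1r.
by rewrite !scalerA mulrC.
Qed.

Lemma u_diff t i j : pw p i != 0 -> pw p j != 0 ->
  u p E gamma w0 g x t.+1 i - u p E gamma w0 g x t.+1 j =
  gamma t *: (Aof t j - Aof t i).
Proof.
move=> ??; rewrite !u_succ // scalerBr; set s := start_of _ _ _.
by rewrite opprD opprK addrACA subrr add0r addrC.
Qed.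
End Iter.

Section Meas.
Variables (d : measure_display) (T : measurableType d) (R : realType) (D : nat).

Definition mrow (V : T -> 'rV[R]_D) :=
  forall a, measurable_fun setT (fun x => V x 0 a).

Lemma mrow_sq V : mrow V -> measurable_fun setT (fun x => sqnorm (V x)).
Proof.
move=> mV; rewrite /sqnorm /dotv.
apply: (measurable_sum _ (h := fun a x => V x 0 a * V x 0 a)) => a.
exact: measurable_funM.
Qed.

Lemma mrowZ c V : mrow V -> mrow (fun x => c *: V x).
Proof.
move=> mV a; rewrite (_ : (fun x => _) = (fun x => c * V x 0 a)).
  exact: measurable_funM.
by apply: funext => x; rewrite mxE.
Qed.

Lemma mrowB V W : mrow V -> mrow W -> mrow (fun x => V x - W x).
Proof.
move=> mV mW a; rewrite (_ : (fun x => _) = (fun x => V x 0 a - W x 0 a)).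
  exact: measurable_funB.
by apply: funext => x; rewrite !mxE.
Qed.

Lemma mrow_sum (I : finType) (V : I -> T -> 'rV[R]_D) :
  (forall n, mrow (V n)) -> mrow (fun x => \sum_n V n x).
Proof.
move=> mV a; rewrite (_ : (fun x => _) = (fun x => \sum_n V n x 0 a)).
  by apply: (measurable_sum _ (h := fun n x => V n x 0 a)) => n; exact: mV.
by apply: funext => x; rewrite summxE.
Qed.
End Meas.

Lemma sqA (R : realType) (T : Type) (C D : nat) (p : 'I_C -> 'I_C -> R) (E : nat)
  (g : 'I_C -> nat -> nat -> T -> 'rV[R]_D) (x : T) t i :
  0 < pw p i -> (forall n, 0 <= p i n) ->
  sqnorm (Aof p E g x t i) <=
  \sum_n ((pw p i)^-1 * p i n) * (E%:R * \sum_(k < E) sqnorm (g n t k x)).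
Proof.
move=> pi0 p0; rewrite /Aof scaler_sumr.
under eq_bigr => n _ do rewrite scalerA.
apply: le_trans (jensen_vec _ _ _) _.
- by move=> n; rewrite mulr_ge0 // invr_ge0 ltW.
- by rewrite -mulr_sumr -/(pw p i) mulVf // lt0r_neq0.
apply: ler_sum => n _; apply: ler_wpM2l; last exact: sum_sq.
by rewrite mulr_ge0 // invr_ge0 ltW.
Qed.

Unset Implicit Arguments. Set Strict Implicit.

Theorem lemma6 (R : realType) (d : measure_display) (T : measurableType d)
  (P : probability T R) (C D : nat)
  (F : 'I_C -> 'rV[R]_D -> R) (gradF : 'I_C -> 'rV[R]_D -> 'rV[R]_D)
  (p : 'I_C -> 'I_C -> R) (beta : R) (E : nat) (gamma : nat -> R)
  (w0 : 'rV[R]_D) (g : 'I_C -> nat -> nat -> T -> 'rV[R]_D)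
  (sigma G L : R) :
  (* similarity weights *)
  (forall i n, 0 <= p i n) ->
  (forall i n, p i n = p n i) ->
  (forall i, p i i = 0) ->
  \sum_(i < C) \sum_(n < C) p i n = 1 ->
  (forall i, 0 < pw p i) ->
  (* algorithm parameters *)
  0 < beta < 1 ->
  (1 <= E)%N ->
  (* gradF i is the gradient of F i *)
  (forall i y, differentiable (F i) y /\
     forall v, 'd (F i) y v = dotv (gradF i y) v) ->
  (* stochastic gradients are random vectors *)
  (forall i t k a b, measurable_fun setT (fun x => g i t k x a b)) ->
  (* unbiasedness *)
  (forall i t k a,
     (\int[P]_x (g i t k x 0 a)%:E =
      \int[P]_x ((gradF i (wtilde p beta E gamma w0 g x t i k)) 0 a)%:E)%E) ->
  (* bounded variance *)
  (forall i t k,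
     (\int[P]_x (sqnorm (g i t k x - gradF i (wtilde p beta E gamma w0 g x t i k)))%:E
      <= (sigma ^+ 2)%:E)%E) ->
  (* bounded second moment *)
  (forall i t k, (\int[P]_x (sqnorm (g i t k x))%:E <= (G ^+ 2)%:E)%E) ->
  (* L-smoothness *)
  (forall i y z, enorm (gradF i y - gradF i z) <= L * enorm (y - z)) ->
  forall (t : nat) (i j : 'I_C),
    (\int[P]_x (sqnorm (u p E gamma w0 g x t i - u p E gamma w0 g x t j))%:E
     <= (if t is t'.+1 then 4 * gamma t' ^+ 2 * (E%:R) ^+ 2 * G ^+ 2 else 0)%:E)%E.
Proof.
move=> hp0 _ _ _ hpw _ hE _ hg _ _ hG _ t i j.
case: t => [|t].
  rewrite integral0_eq // => x _ /=.
  by rewrite /u /= subrr /sqnorm /dotv big1 // => a _; rewrite mxE mul0r.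
have pi0 := lt0r_neq0 (hpw i); have pj0 := lt0r_neq0 (hpw j).
under eq_integral => x _ do rewrite u_diff //.
pose c (n : 'I_C) := 2 * gamma t ^+ 2 * E%:R *
   ((pw p i)^-1 * p i n + (pw p j)^-1 * p j n).
have c0 n : 0 <= c n.
  rewrite /c; apply: mulr_ge0; first by apply: mulr_ge0; [apply: mulr_ge0|]; rewrite ?sqr_ge0 ?ler0n.
  by rewrite addr_ge0 // mulr_ge0 // invr_ge0 ltW.
pose h (nk : 'I_C * 'I_E) x := sqnorm (g nk.1 t nk.2 x).
have mgr n k : mrow (g n t k).
  by move=> a; exact: hg.
have mh nk : measurable_fun setT (h nk) by apply: mrow_sq.
apply: (@le_trans _ _ (\int[P]_x (\sum_nk c nk.1 * h nk x)%:E)%E).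
  apply: ge0_le_integral => //.
  - by move=> x _; rewrite lee_fin sqnorm_ge0.
  - apply/measurable_EFinP; apply: mrow_sq; apply: mrowZ; apply: mrowB.
      by apply: mrowZ; apply: mrow_sum => n; apply: mrowZ; apply: mrow_sum => k.
    by apply: mrowZ; apply: mrow_sum => n; apply: mrowZ; apply: mrow_sum => k.
  - apply/measurable_EFinP.
    by apply: (measurable_sum _ (h := fun nk x => c nk.1 * h nk x)) => nk;
       apply: measurable_funM.
  move=> x _; rewrite lee_fin sqnormZ.
  have Hi := @sqA R T C D p E g x t i (hpw i) (hp0 i).
  have Hj := @sqA R T C D p E g x t j (hpw j) (hp0 j).
  apply: le_trans (ler_wpM2l (sqr_ge0 (gamma t)) (sqnormB _ _)) _.
  apply: le_trans (ler_wpM2l (sqr_ge0 (gamma t))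
     (lerD (ler_wpM2l _ Hj) (ler_wpM2l _ Hi))) _ => //.
  rewrite le_eqVlt; apply/orP; left; apply/eqP.
  rewrite -(pair_big xpredT xpredT (fun n k => c n * h (n, k) x)) /=.
  rewrite !mulr_sumr -big_split mulr_sumr; apply: eq_bigr => n _.
  rewrite -mulr_sumr /c /h /=; ring.
under eq_integral => x _ do rewrite -sumEFin.
rewrite ge0_integral_sum //; last first.
  by move=> nk x _; rewrite lee_fin mulr_ge0 // sqnorm_ge0.
  by move=> nk; apply/measurable_EFinP; apply: measurable_funM.
apply: (@le_trans _ _ (\sum_nk (c nk.1 * G ^+ 2)%:E)%E).
  apply: lee_sum => nk _.
  under eq_integral => x _ do rewrite EFinM.
  rewrite ge0_integralZl_EFin //; last first.
    by apply/measurable_EFinP.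
    by move=> x _; rewrite lee_fin sqnorm_ge0.
  rewrite [X in (_ <= X)%E]EFinM; apply: lee_pmul => //.
  - by rewrite lee_fin.
  - by apply: integral_ge0 => x _; rewrite lee_fin sqnorm_ge0.
  - exact: hG.
rewrite sumEFin lee_fin le_eqVlt; apply/orP; left; apply/eqP.
rewrite -(pair_big xpredT xpredT (fun n (k : 'I_E) => c n * G ^+ 2)) /=.
under eq_bigr => n _ do rewrite sumr_const card_ord.
rewrite (eq_bigr (fun n => (2 * gamma t ^+ 2 * E%:R * G ^+ 2 * E%:R) *
   ((pw p i)^-1 * p i n + (pw p j)^-1 * p j n))); last first.
  by move=> n _; rewrite -[_ *+ E]mulr_natr /c; ring.
rewrite -mulr_sumr big_split /= -!mulr_sumr -/(pw p i) -/(pw p j).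
rewrite !mulVf //; ring.
Qed.
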